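(* Let $\mu=\sum_{i=1}^m a_i\delta_{u_i}$ and $\nu=\sum_{j=1}^n b_j\delta_{v_j}$ be finitely supported finite measures on $S^2\subset\mathbb{R}^3$ (with $a_i,b_j>0$, $u_i,v_j\in S^2$), and let $(\gamma_0,\gamma_1)\in\Gamma(\mu,\nu)$. Then there exists a discrete semi-coupling $(A,B)\in\mathcal A(\mu,\nu)$ such that $$\int_{S^2\times S^2}\Big|\sqrt{\tfrac{d\gamma_0}{d\gamma}(u,v)}\,u-\sqrt{\tfrac{d\gamma_1}{d\gamma}(u,v)}\,v\Big|^2d\gamma(u,v)=\sum_{i=0}^m\sum_{j=0}^n\big|\sqrt{A_{ij}}\,u_i-\sqrt{B_{ij}}\,v_j\big|^2,$$ where $u_0=v_0=(1,0,0)\in S^2$ and $\gamma$ is a measure on $S^2\times S^2$ with $\gamma_0,\gamma_1\ll\gamma$.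
   Context: $\Gamma(\mu,\nu)$ is the set of pairs $(\gamma_0,\gamma_1)$ of finite Borel measures on $S^2\times S^2$ with $(\operatorname{Proj}_0)_\#\gamma_0=\mu$ and $(\operatorname{Proj}_1)_\#\gamma_1=\nu$. $\mathcal A(\mu,\nu)$ is the set of pairs $(A,B)$ of $(m+1)\times(n+1)$ matrices (indices $i=0,\dots,m$, $j=0,\dots,n$) with: $A_{ij},B_{ij}\ge0$; $a_i=\sum_{j=0}^nA_{ij}$ for $i=1,\dots,m$; $A_{0j}=0$ for all $j$; $b_j=\sum_{i=0}^mB_{ij}$ for $j=1,\dots,n$; $B_{i0}=0$ for all $i$. *)

(* Defs.v *)
From HB Require Import structures.
From mathcomp Require Import all_boot all_order all_algebra.
From mathcomp Require Import all_classical all_reals all_analysis.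
Set Implicit Arguments. Unset Strict Implicit. Unset Printing Implicit Defensive.
Import Order.TTheory GRing.Theory Num.Theory.
Local Open Scope ring_scope.
Local Open Scope classical_set_scope.

(* Points of R^3 are represented as ((x, y), z) : (R * R) * R, equipped with the
   product (= Borel) sigma-algebra. *)
Definition R3 (R : realType) := ((R * R) * R)%type.

Definition vec3 (R : realType) (x y z : R) : R3 R := ((x, y), z).
Definition cx (R : realType) (p : R3 R) : R := p.1.1.
Definition cy (R : realType) (p : R3 R) : R := p.1.2.
Definition cz (R : realType) (p : R3 R) : R := p.2.

Definition sqdist3 (R : realType) (s : R) (p : R3 R) (t : R) (q : R3 R) : R :=
  (s * cx p - t * cx q) ^+ 2 + (s * cy p - t * cy q) ^+ 2 + (s * cz p - t * cz q) ^+ 2.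

Definition S2 (R : realType) : set (R3 R) :=
  [set p | cx p ^+ 2 + cy p ^+ 2 + cz p ^+ 2 = 1].

Definition e1 (R : realType) : R3 R := vec3 1 0 0.

(* extended point lists: index 0 is (1,0,0), index i+1 is u i *)
Definition ext_pts (R : realType) (m : nat) (u : 'I_m -> R3 R) (i : 'I_m.+1) : R3 R :=
  match unlift ord0 i with Some i' => u i' | None => e1 R end.

Definition discrete_semicoupling (R : realType) (m n : nat)
  (a : 'I_m -> R) (b : 'I_n -> R) (A B : 'M[R]_(m.+1, n.+1)) : Prop :=
  (forall i j, 0 <= A i j) /\ (forall i j, 0 <= B i j) /\
  (forall i : 'I_m, a i = \sum_(j < n.+1) A (lift ord0 i) j) /\
  (forall j, A ord0 j = 0) /\
  (forall j : 'I_n, b j = \sum_(i < m.+1) B i (lift ord0 j)) /\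
  (forall i, B i ord0 = 0).

(* Main.v *)
Require Import Defs.
From HB Require Import structures.
From mathcomp Require Import all_boot all_order all_algebra.
From mathcomp Require Import all_classical all_reals all_analysis.
From mathcomp Require Import measurable_realfun.
From mathcomp Require Import ring lra.
Import Order.TTheory GRing.Theory Num.Theory.
Local Open Scope ring_scope.
Local Open Scope classical_set_scope.
Local Open Scope charge_scope.
Section Weights.
Variable R : realType.
Variables (X : eqType) (k : nat) (c : 'I_k -> R) (p : 'I_k -> X).
Hypothesis hc : forall i, 0 < c i.

Definition wsum (i : 'I_k) := \sum_(i' < k | p i' == p i) c i'.
Definition wt (i : 'I_k) := c i / wsum i.

Lemma wsum_gt0 i : 0 < wsum i.
Proof.
rewrite /wsum (bigD1 i) //=.
have : 0 <= \sum_(i0 < k | (p i0 == p i) && (i0 != i)) c i0.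
  by apply: sumr_ge0 => j _; exact: ltW.
have := hc i; lra.
Qed.

Lemma wt_ge0 i : 0 <= wt i.
Proof. by rewrite /wt divr_ge0 // ltW // ?wsum_gt0. Qed.

Lemma wtK i : wt i * wsum i = c i.
Proof. by rewrite /wt divfK // gt_eqF // wsum_gt0. Qed.

Lemma wt_id1 (y : X) : (exists i, p i = y) ->
  \sum_(i < k) wt i * (p i == y)%:R = 1.
Proof.
move=> [i0 hi0].
transitivity (\sum_(i < k | p i == y) c i / \sum_(i' < k | p i' == y) c i').
  rewrite [RHS]big_mkcond; apply: eq_bigr => i _.
  case: eqP => [<-|_]; by rewrite ?mulr1 ?mulr0.
rewrite -mulr_suml divff // gt_eqF //.
have := wsum_gt0 i0; rewrite /wsum hi0 => //.
Qed.

Lemma wt_id0 (y : X) : ~ (exists i, p i = y) ->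
  \sum_(i < k) wt i * (p i == y)%:R = 0.
Proof.
move=> hn; apply: big1 => i _; case: eqP => [hi|_]; last by rewrite mulr0.
by exfalso; apply: hn; exists i.
Qed.
End Weights.
Arguments wsum {R X k}. Arguments wt {R X k}.
Arguments wsum_gt0 {R X k c p}. Arguments wt_ge0 {R X k c p}.
Arguments wtK {R X k c p}. Arguments wt_id1 {R X k c p}. Arguments wt_id0 {R X k c p}.

Section FinPts.
Variable R : realType.
Local Notation T := (R3 R * R3 R)%type.

Lemma mset1_R3 (p : R3 R) : measurable [set p].
Proof.
have -> : [set p] = ([set p.1.1] `*` [set p.1.2]) `*` [set p.2].
  apply/seteqP; split; move=> [[x y] z] /=.
    by move=> <-.
  by case: p => [[? ?] ?] /= [[-> ->] ->].
by apply: measurableX; [apply: measurableX|]; exact: measurable_set1.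
Qed.

Lemma mset1_T (p : T) : measurable [set p].
Proof.
have -> : [set p] = [set p.1] `*` [set p.2].
  apply/seteqP; split; move=> [x y] /=.
    by move=> <-.
  by case: p => [? ?] /= [-> ->].
by apply: measurableX; exact: mset1_R3.
Qed.

Lemma int_fin_pts (mu : {measure set T -> \bar R}) (I : finType) (p : I -> T)
  (c : I -> R) (S : set T) (h : T -> \bar R) :
  (forall i, 0 <= c i) ->
  (forall x, S x -> \sum_i c i * (p i == x)%:R = 1) ->
  (forall x, ~ S x -> \sum_i c i * (p i == x)%:R = 0) ->
  (forall x, (0 <= h x)%E) -> measurable_fun setT h ->
  (\int[mu]_(x in S) h x = \sum_i (c i)%:E * (h (p i) * mu [set p i]))%E.
Proof.
move=> c0 hS1 hS0 h0 mh.
rewrite integral_mkcond.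
transitivity (\int[mu]_x (\sum_(i <- index_enum I) ((c i)%:E * (h \_ [set p i]) x)))%E.
  apply: eq_integral => x _.
  transitivity (h x * (\sum_i c i * (p i == x)%:R)%:E)%E.
    rewrite patchE; case: ifPn => [/set_mem Sx|nSx].
      by rewrite hS1 // mule1.
    by rewrite hS0 ?mule0 // => Sx; move/negP: nSx; apply; exact/mem_set.
  rewrite -sumEFin ge0_sume_distrr; last first.
    by move=> i _; rewrite lee_fin mulr_ge0 //; case: (_ == _).
  apply: eq_bigr => i _.
  rewrite patchE; case: eqP => [<-|hne].
    by rewrite mem_set //= mulr1 muleC.
  rewrite ifF ?mulr0 ?mule0 //; apply/negP => /set_mem /= hx.
  by apply: hne; rewrite hx.
rewrite ge0_integral_sum //; last 2 first.
- move=> i; apply: emeasurable_funM; first exact: measurable_cst.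
  by apply/(measurable_restrictT _ (mset1_T _)); exact: measurable_funS mh.
- by move=> i x _; rewrite mule_ge0 // ?lee_fin // patchE; case: ifPn.
apply: eq_bigr => i _.
rewrite ge0_integralZl_EFin //; last 2 first.
- by move=> x _; rewrite patchE; case: ifPn.
- by apply/(measurable_restrictT _ (mset1_T _)); exact: measurable_funS mh.
congr (_ * _)%E; rewrite -integral_mkcond.
transitivity (\int[mu]_(x in [set p i]) (cst (h (p i)) x))%E.
  by apply: eq_integral => x /set_mem /= ->.
by rewrite integral_cst //; exact: mset1_T.
Qed.
End FinPts.
Section RN.
Variable R : realType.
Local Notation T := (R3 R * R3 R)%type.
Variables (nu : {finite_measure set T -> \bar R})
  (mu : {sigma_finite_measure set T -> \bar R}).
Hypothesis numu : nu `<< mu.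
Local Notation rho := ('d (charge_of_finite_measure nu) '/d mu).

Lemma dom_c : charge_of_finite_measure nu `<< mu.
Proof. exact: numu. Qed.

Lemma rho_int E : measurable E -> nu E = (\int[mu]_(x in E) rho x)%E.
Proof. by move=> mE; rewrite -Radon_Nikodym_integral //; exact: dom_c. Qed.

Lemma rho_integrable : mu.-integrable setT rho.
Proof. exact: Radon_Nikodym_integrable dom_c. Qed.

Lemma rho_meas : measurable_fun setT rho.
Proof. exact: measurable_int rho_integrable. Qed.

Lemma rho_fin x : rho x \is a fin_num.
Proof. exact: Radon_Nikodym_fin_num dom_c. Qed.

Lemma rho_0_ae N : measurable N -> nu N = 0%E -> ae_eq mu N rho (cst 0%E).
Proof.
move=> mN nuN; apply: integral_ae_eq => //;
  try exact: measurable_cst;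
  try exact: integrableS measurableT mN (subsetT _) rho_integrable.
move=> E EN mE; rewrite integral0 -rho_int //.
  exact: subset_measure0 mE mN EN nuN.
Qed.

Lemma rho_ge0_ae : {ae mu, forall x, (0 <= rho x)%E}.
Proof.
pose N := [set x | (rho x < 0)%E].
have mN : measurable N.
  by have := measurable_lte measurableT rho_meas (measurable_cst 0%E); rewrite setTI.
have intN : mu.-integrable N rho.
  exact: integrableS measurableT mN (subsetT _) rho_integrable.
have : ae_eq mu N rho (cst 0%E).
  apply: integral_ae_eq => //; try exact: measurable_cst.
  move=> E EN mE; rewrite integral0; apply/eqP; rewrite eq_le; apply/andP; split.
    rewrite -(integral0 mu E).
    apply: le_integral => //.
    - exact: integrableS mN mE EN intN.
    - apply/integrableP; split; first exact: measurable_cst.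
      by rewrite /= normr0 integral0.
    - by move=> x /set_mem /EN /= /ltW.
  by rewrite -rho_int //; exact: measure_ge0.
apply: filterS => x hx.
rewrite leNgt; apply/negP => hlt.
have h := hx hlt; by rewrite h /= ltxx in hlt.
Qed.

Lemma rho_pt x : nu [set x] = (rho x * mu [set x])%E.
Proof.
rewrite rho_int; last exact: mset1_T.
transitivity (\int[mu]_(y in [set x]) cst (rho x) y)%E.
  by apply: eq_integral => y /set_mem /= ->.
by rewrite integral_cst //; exact: mset1_T.
Qed.

End RN.

Lemma mu_pt_fin (R : realType) (mu : {sigma_finite_measure set (R3 R * R3 R)%type -> \bar R}) x :
  (mu [set x] < +oo)%E.
Proof.
have [F FT hF] := sigma_finiteT mu.
have : [set: (R3 R * R3 R)%type] x by [].
rewrite FT => -[i _ Fix]; have [mF fF] := hF i.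
apply: le_lt_trans fF; apply: le_measure; rewrite ?inE //; first exact: mset1_T.
by move=> y ->.
Qed.
Section Alg.
Variable R : realType.
Local Notation T := (R3 R * R3 R)%type.

Definition dot3 (p q : R3 R) : R := cx p * cx q + cy p * cy q + cz p * cz q.

Lemma sqdist3E s p t q : S2 p -> S2 q ->
  sqdist3 s p t q = s ^+ 2 + t ^+ 2 - 2 * s * t * dot3 p q.
Proof.
rewrite /S2 /= => hp hq.
transitivity (s ^+ 2 * (cx p ^+ 2 + cy p ^+ 2 + cz p ^+ 2) +
              t ^+ 2 * (cx q ^+ 2 + cy q ^+ 2 + cz q ^+ 2) - 2 * s * t * dot3 p q).
  by rewrite /sqdist3 /dot3; ring.
by rewrite hp hq !mulr1.
Qed.

Lemma sqdist3_mx (A B : R) p q : 0 <= A -> 0 <= B -> S2 p -> S2 q ->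
  sqdist3 (Num.sqrt A) p (Num.sqrt B) q = A + B - 2 * Num.sqrt (A * B) * dot3 p q.
Proof.
move=> hA hB hp hq; rewrite sqdist3E // !sqr_sqrtr // sqrtrM //.
by rewrite mulrA.
Qed.

Lemma sqdist3_pt r0 r1 M g0 g1 p q : 0 <= M -> g0 = r0 * M -> g1 = r1 * M ->
  0 <= g0 -> 0 <= g1 -> S2 p -> S2 q ->
  sqdist3 (Num.sqrt r0) p (Num.sqrt r1) q * M =
  g0 + g1 - 2 * Num.sqrt (g0 * g1) * dot3 p q.
Proof.
move=> M0 e0 e1 h0 h1 hp hq; rewrite sqdist3E //.
have [M00|Mpos] := eqVneq M 0.
  rewrite e0 e1 M00 !mulr0 sqrtr0; ring.
have Mgt : 0 < M by rewrite lt_def Mpos M0.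
have r00 : 0 <= r0.
  by move: h0; rewrite e0 pmulr_lge0.
have r10 : 0 <= r1.
  by move: h1; rewrite e1 pmulr_lge0.
have -> : g0 * g1 = (r0 * r1) * M ^+ 2 by rewrite e0 e1; ring.
rewrite sqrtrM ?mulr_ge0 // sqrtrM // sqrtr_sqr ger0_norm // !sqr_sqrtr //.
by rewrite e0 e1; ring.
Qed.

Lemma meas_coord1 : measurable_fun setT (fun x : T => cx x.1).
Proof. exact: measurableT_comp measurable_fst (measurableT_comp measurable_fst measurable_fst). Qed.
Lemma meas_coord2 : measurable_fun setT (fun x : T => cy x.1).
Proof. exact: measurableT_comp measurable_snd (measurableT_comp measurable_fst measurable_fst). Qed.
Lemma meas_coord3 : measurable_fun setT (fun x : T => cz x.1).
Proof. exact: measurableT_comp measurable_snd measurable_fst. Qed.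
Lemma meas_coord4 : measurable_fun setT (fun x : T => cx x.2).
Proof. exact: measurableT_comp measurable_fst (measurableT_comp measurable_fst measurable_snd). Qed.
Lemma meas_coord5 : measurable_fun setT (fun x : T => cy x.2).
Proof. exact: measurableT_comp measurable_snd (measurableT_comp measurable_fst measurable_snd). Qed.
Lemma meas_coord6 : measurable_fun setT (fun x : T => cz x.2).
Proof. exact: measurableT_comp measurable_snd measurable_snd. Qed.

Lemma meas_sqd (s0 s1 : T -> R) : measurable_fun setT s0 -> measurable_fun setT s1 ->
  measurable_fun setT (fun x => sqdist3 (s0 x) x.1 (s1 x) x.2).
Proof.
move=> m0 m1; rewrite /sqdist3.
apply: measurable_funD; [apply: measurable_funD|];
  apply: measurable_funX; apply: measurable_funB; apply: measurable_funM => //.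
- exact: meas_coord1.
- exact: meas_coord4.
- exact: meas_coord2.
- exact: meas_coord5.
- exact: meas_coord3.
- exact: meas_coord6.
Qed.

Lemma mnorm3 : measurable_fun setT (fun p : R3 R => cx p ^+ 2 + cy p ^+ 2 + cz p ^+ 2).
Proof.
rewrite /cx /cy /cz.
apply: measurable_funD; [apply: measurable_funD|]; apply: measurable_funX.
- exact: measurableT_comp measurable_fst measurable_fst.
- exact: measurableT_comp measurable_snd measurable_fst.
- exact: measurable_snd.
Qed.

Lemma mS2 : measurable (@S2 R).
Proof.
have := mnorm3 measurableT [set 1] (measurable_set1 (1:R)).
by rewrite setTI.
Qed.

Lemma meas_s (nu : {finite_measure set T -> \bar R})
  (mu : {sigma_finite_measure set T -> \bar R}) : nu `<< mu ->
  measurable_fun setT (fun x => Num.sqrt (fine ('d (charge_of_finite_measure nu) '/d mu x))).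
Proof.
move=> H.
have h1 := continuous_measurable_fun (@sqrt_continuous R).
have h2 : measurable_fun [set: \bar R] (@fine R) := fine_measurable measurableT.
have h3 := measurableT_comp h2 (@rho_meas R nu mu H).
have h4 := measurableT_comp h1 h3.
exact: h4.
Qed.

Lemma e1_S2 : S2 (e1 R).
Proof. by rewrite /S2 /e1 /vec3 /cx /cy /cz /=; rewrite expr1n expr0n /= !addr0. Qed.

Lemma ext_S2 k (w : 'I_k -> R3 R) i : (forall i, S2 (w i)) -> S2 (ext_pts w i).
Proof. by move=> hw; rewrite /ext_pts; case: unlift => [i'|]; [exact: hw|exact: e1_S2]. Qed.

Lemma in_set1E (X : Type) (x y : X) : (x \in [set y]) = `[< x = y >].
Proof. by apply/idP/idP => [/set_mem /= ->|/asboolP ->]; [apply/asboolP|apply/mem_set]. Qed.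

End Alg.

Lemma sqdist3_ge0 (R : realType) s p t q : 0 <= @sqdist3 R s p t q.
Proof. by rewrite /sqdist3; apply: addr_ge0; [apply: addr_ge0|]; exact: sqr_ge0. Qed.

Arguments int_fin_pts {R}.
Arguments rho_int {R nu mu}. Arguments rho_ge0_ae {R nu mu}.
Arguments rho_0_ae {R nu mu}. Arguments rho_pt {R nu mu}.
Arguments rho_fin {R nu mu}. Arguments rho_integrable {R nu mu}.
Arguments rho_meas {R nu mu}. Arguments meas_s {R nu mu}.
Arguments mS2 {R}.
Arguments mset1_R3 {R}. Arguments mset1_T {R}.
Arguments sqdist3E {R s p t q}. Arguments sqdist3_mx {R A B p q}.
Arguments sqdist3_pt {R r0 r1 M g0 g1 p q}. Arguments ext_S2 {R k w}.

Lemma sum2_lin (R : realType) (I J : finType) (F G H : I -> J -> R) :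
  \sum_i \sum_j (F i j + G i j - 2 * H i j) =
  \sum_i \sum_j F i j + \sum_i \sum_j G i j - 2 * \sum_i \sum_j H i j.
Proof.
transitivity (\sum_i (\sum_j F i j + \sum_j G i j - 2 * \sum_j H i j)).
  by apply: eq_bigr => i _; rewrite mulr_sumr -big_split -sumrB.
by rewrite mulr_sumr -big_split -sumrB.
Qed.
Arguments dot3 {R}.
Lemma natr_and (R : realType) (b1 b2 : bool) : ((b1 && b2)%:R : R) = b1%:R * b2%:R.
Proof. by case: b1; case: b2; rewrite ?mulr1 ?mulr0. Qed.

Lemma dirac_set1 (R : realType) (x y : R3 R) :
  (\d_x [set y] = ((x == y)%:R)%:E :> \bar R)%E.
Proof.
rewrite diracE in_set1E; have [->|hne] := eqVneq x y.
  by rewrite asboolT // eqxx.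
rewrite asboolF ?(negbTE hne) //; exact/eqP.
Qed.

Theorem lemma2p5 (R : realType) (m n : nat)
  (a : 'I_m -> R) (u : 'I_m -> R3 R) (b : 'I_n -> R) (v : 'I_n -> R3 R)
  (ha : forall i, 0 < a i) (hu : forall i, @S2 R (u i))
  (hb : forall j, 0 < b j) (hv : forall j, @S2 R (v j))
  (gamma0 gamma1 : {finite_measure set (R3 R * R3 R)%type -> \bar R})
  (hg0S : gamma0 (~` (@S2 R `*` @S2 R)) = 0%E)
  (hg1S : gamma1 (~` (@S2 R `*` @S2 R)) = 0%E)
  (hg0 : forall X : set (R3 R), measurable X ->
     gamma0 (X `*` setT) = (\sum_(i < m) ((a i)%:E * \d_(u i) X))%E)
  (hg1 : forall Y : set (R3 R), measurable Y ->
     gamma1 (setT `*` Y) = (\sum_(j < n) ((b j)%:E * \d_(v j) Y))%E) :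
  exists A B : 'M[R]_(m.+1, n.+1),
    discrete_semicoupling a b A B /\
    forall gamma : {sigma_finite_measure set (R3 R * R3 R)%type -> \bar R},
      gamma0 `<< gamma -> gamma1 `<< gamma ->
      (\int[gamma]_(x in @S2 R `*` @S2 R)
         (sqdist3
            (Num.sqrt (fine ('d (charge_of_finite_measure gamma0) '/d gamma x))) x.1
            (Num.sqrt (fine ('d (charge_of_finite_measure gamma1) '/d gamma x))) x.2)%:E)%E
      = (\sum_(i < m.+1) \sum_(j < n.+1)
           sqdist3 (Num.sqrt (A i j)) (ext_pts u i) (Num.sqrt (B i j)) (ext_pts v j))%:E.
Proof.
pose P : set (R3 R) := \bigcup_(i in [set: 'I_m]) [set u i].
pose Q : set (R3 R) := \bigcup_(j in [set: 'I_n]) [set v j].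
have mP : measurable P.
  by apply: fin_bigcup_measurable; [exact: finite_finset|move=> i _; exact: mset1_R3].
have mQ : measurable Q.
  by apply: fin_bigcup_measurable; [exact: finite_finset|move=> i _; exact: mset1_R3].
have PE y : P y <-> exists i, u i = y.
  by split => [[i _ /= ->]|[i <-]]; [exists i|exists i].
have QE y : Q y <-> exists j, v j = y.
  by split => [[i _ /= ->]|[i <-]]; [exists i|exists i].
pose wa := wt a u. pose wb := wt b v.
have wa0 i : 0 <= wa i by exact: wt_ge0 ha i.
have wb0 j : 0 <= wb j by exact: wt_ge0 hb j.
pose g0 i j := fine (gamma0 [set (u i, v j)]).
pose g1 i j := fine (gamma1 [set (u i, v j)]).
have g0E i j : gamma0 [set (u i, v j)] = (g0 i j)%:E.
  by rewrite /g0 fineK // fin_num_measure //; exact: mset1_T.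
have g1E i j : gamma1 [set (u i, v j)] = (g1 i j)%:E.
  by rewrite /g1 fineK // fin_num_measure //; exact: mset1_T.
have g00 i j : 0 <= g0 i j by rewrite /g0 fine_ge0 // measure_ge0.
have g10 i j : 0 <= g1 i j by rewrite /g1 fine_ge0 // measure_ge0.
pose Ap i j := wa i * wb j * g0 i j.
pose Bp i j := wa i * wb j * g1 i j.
have Ap0 i j : 0 <= Ap i j.
  by rewrite /Ap; apply: mulr_ge0; [apply: mulr_ge0|].
have Bp0 i j : 0 <= Bp i j.
  by rewrite /Bp; apply: mulr_ge0; [apply: mulr_ge0|].
have KA i : \sum_(j < n) Ap i j <= a i.
  have H : \sum_(j < n) wb j * g0 i j <= wsum a u i.
    have hS1 : forall x, ([set u i] `*` Q) x ->
        \sum_j wb j * ((u i, v j) == x)%:R = 1.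
      move=> [x1 x2] [/= <- Qx2].
      transitivity (\sum_j wb j * (v j == x2)%:R).
        by apply: eq_bigr => j _; rewrite xpair_eqE eqxx.
      exact: wt_id1 hb _ ((QE x2).1 Qx2).
    have hS0 : forall x, ~ ([set u i] `*` Q) x ->
        \sum_j wb j * ((u i, v j) == x)%:R = 0.
      move=> [x1 x2] nS.
      have [ex1|ne] := eqVneq (u i) x1.
        transitivity (\sum_j wb j * (v j == x2)%:R).
          by apply: eq_bigr => j _; rewrite xpair_eqE ex1 eqxx.
        apply: wt_id0 => hex; apply: nS; split => //=.
        exact/QE.
      by apply: big1 => j _; rewrite xpair_eqE (negbTE ne) /= mulr0.
    have E1 := int_fin_pts gamma0 _ (fun j : 'I_n => (u i, v j)) wb ([set u i] `*` Q)
      (cst 1%E) wb0 hS1 hS0 (fun _ => lee01) (measurable_cst _).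
    rewrite integral_cst /= in E1; last exact: measurableX (mset1_R3 _) mQ.
    rewrite mul1e in E1.
    have : (gamma0 ([set u i] `*` Q) <= gamma0 ([set u i] `*` setT))%E.
      apply: le_measure; rewrite ?inE.
      - exact: measurableX (mset1_R3 _) mQ.
      - exact: measurableX (mset1_R3 _) measurableT.
      - by move=> x [? ?]; split.
    rewrite E1 hg0; last exact: mset1_R3.
    have -> : (\sum_(i0 < m) (a i0)%:E * \d_(u i0) [set u i])%E =
              (wsum a u i)%:E.
      rewrite /wsum -sumEFin [RHS]big_mkcond /=; apply: eq_bigr => i0 _.
      by rewrite dirac_set1; case: (_ == _); rewrite /= ?mulr1n ?mulr0n ?mule1 ?mule0.
    have -> : (\sum_(j < n) (wb j)%:E * (cst 1%E (u i, v j) * gamma0 [set (u i, v j)]))%E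
              = (\sum_(j < n) wb j * g0 i j)%:E.
      rewrite -sumEFin; apply: eq_bigr => j _.
      by rewrite /= mul1e g0E.
    by rewrite lee_fin.
  have -> : \sum_(j < n) Ap i j = wa i * \sum_(j < n) wb j * g0 i j.
    by rewrite mulr_sumr; apply: eq_bigr => j _; rewrite /Ap mulrA.
  rewrite -(@wtK _ _ _ a u ha i).
  by apply: ler_wpM2l.
have KB j : \sum_(i < m) Bp i j <= b j.
  have H : \sum_(i < m) wa i * g1 i j <= wsum b v j.
    have hS1 : forall x, (P `*` [set v j]) x ->
        \sum_i wa i * ((u i, v j) == x)%:R = 1.
      move=> [x1 x2] [/= Px1 <-].
      transitivity (\sum_i wa i * (u i == x1)%:R).
        by apply: eq_bigr => i _; rewrite xpair_eqE eqxx andbT.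
      exact: wt_id1 ha _ ((PE x1).1 Px1).
    have hS0 : forall x, ~ (P `*` [set v j]) x ->
        \sum_i wa i * ((u i, v j) == x)%:R = 0.
      move=> [x1 x2] nS.
      have [ex2|ne] := eqVneq (v j) x2.
        transitivity (\sum_i wa i * (u i == x1)%:R).
          by apply: eq_bigr => i _; rewrite xpair_eqE ex2 eqxx andbT.
        apply: wt_id0 => hex; apply: nS; split => //=.
        exact/PE.
      by apply: big1 => i _; rewrite xpair_eqE (negbTE ne) andbF /= mulr0.
    have E1 := int_fin_pts gamma1 _ (fun i : 'I_m => (u i, v j)) wa (P `*` [set v j])
      (cst 1%E) wa0 hS1 hS0 (fun _ => lee01) (measurable_cst _).
    rewrite integral_cst /= in E1; last exact: measurableX mP (mset1_R3 _).
    rewrite mul1e in E1.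
    have : (gamma1 (P `*` [set v j]) <= gamma1 (setT `*` [set v j]))%E.
      apply: le_measure; rewrite ?inE.
      - exact: measurableX mP (mset1_R3 _).
      - exact: measurableX measurableT (mset1_R3 _).
      - by move=> x [? ?]; split.
    rewrite E1 hg1; last exact: mset1_R3.
    have -> : (\sum_(j0 < n) (b j0)%:E * \d_(v j0) [set v j])%E =
              (wsum b v j)%:E.
      rewrite /wsum -sumEFin [RHS]big_mkcond /=; apply: eq_bigr => j0 _.
      by rewrite dirac_set1; case: (_ == _); rewrite /= ?mulr1n ?mulr0n ?mule1 ?mule0.
    have -> : (\sum_(i < m) (wa i)%:E * (cst 1%E (u i, v j) * gamma1 [set (u i, v j)]))%E
              = (\sum_(i < m) wa i * g1 i j)%:E.
      rewrite -sumEFin; apply: eq_bigr => i _.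
      by rewrite /= mul1e g1E.
    by rewrite lee_fin.
  have -> : \sum_(i < m) Bp i j = wb j * \sum_(i < m) wa i * g1 i j.
    by rewrite mulr_sumr; apply: eq_bigr => i _; rewrite /Bp; ring.
  rewrite -(@wtK _ _ _ b v hb j).
  by apply: ler_wpM2l.
pose A : 'M[R]_(m.+1, n.+1) := \matrix_(i, j)
  match unlift ord0 i with
  | None => 0
  | Some i' => match unlift ord0 j with
               | None => a i' - \sum_(j' < n) Ap i' j'
               | Some j' => Ap i' j' end end.
pose B : 'M[R]_(m.+1, n.+1) := \matrix_(i, j)
  match unlift ord0 j with
  | None => 0
  | Some j' => match unlift ord0 i with
               | None => b j' - \sum_(i' < m) Bp i' j'
               | Some i' => Bp i' j' end end.
have A0j j : A ord0 j = 0 by rewrite mxE unlift_none.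
have Ai0 (i : 'I_m) : A (lift ord0 i) ord0 = a i - \sum_(j' < n) Ap i j'.
  by rewrite mxE liftK unlift_none.
have Aij (i : 'I_m) (j : 'I_n) : A (lift ord0 i) (lift ord0 j) = Ap i j by rewrite mxE !liftK.
have Bi0 i : B i ord0 = 0 by rewrite mxE unlift_none.
have B0j (j : 'I_n) : B ord0 (lift ord0 j) = b j - \sum_(i' < m) Bp i' j.
  by rewrite mxE liftK unlift_none.
have Bij (i : 'I_m) (j : 'I_n) : B (lift ord0 i) (lift ord0 j) = Bp i j by rewrite mxE !liftK.
have Age0 i j : 0 <= A i j.
  rewrite mxE; case: unlift => [i'|//]; case: unlift => [j'|]; [exact: Ap0|by rewrite subr_ge0].
have Bge0 i j : 0 <= B i j.
  rewrite mxE; case: (unlift ord0 j) => [j'|//].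
  by case: unlift => [i'|]; [exact: Bp0|rewrite subr_ge0].
have rowA (i : 'I_m) : \sum_(j < n.+1) A (lift ord0 i) j = a i.
  rewrite big_ord_recl Ai0.
  have -> : \sum_(j < n) A (lift ord0 i) (lift ord0 j) = \sum_(j < n) Ap i j.
    by apply: eq_bigr => j _; exact: Aij.
  by rewrite subrK.
have colB (j : 'I_n) : \sum_(i < m.+1) B i (lift ord0 j) = b j.
  rewrite big_ord_recl B0j.
  have -> : \sum_(i < m) B (lift ord0 i) (lift ord0 j) = \sum_(i < m) Bp i j.
    by apply: eq_bigr => i _; exact: Bij.
  by rewrite subrK.
exists A, B; split.
  split; first exact: Age0. split; first exact: Bge0.
  split; first by move=> i; rewrite rowA.
  split; first exact: A0j.
  split; first by move=> j; rewrite colB.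
  exact: Bi0.
move=> gamma H0 H1.
set rho0 := 'd (charge_of_finite_measure gamma0) '/d gamma.
set rho1 := 'd (charge_of_finite_measure gamma1) '/d gamma.
pose f x := sqdist3 (Num.sqrt (fine (rho0 x))) x.1 (Num.sqrt (fine (rho1 x))) x.2.
pose D : set (R3 R * R3 R)%type := @S2 R `*` @S2 R.
pose PQ : set (R3 R * R3 R)%type := P `*` Q.
pose E := D `\` PQ.
have mD : measurable D := measurableX mS2 mS2.
have mPQ : measurable PQ := measurableX mP mQ.
have mE : measurable E := measurableD mD mPQ.
have PQD : PQ `<=` D.
  move=> [x y] [/= /PE [i <-] /QE [j <-]]; split; [exact: hu|exact: hv].
have DU : D = PQ `|` E by rewrite /E setDUK.
have disj : PQ `&` E = set0.
  by apply/seteqP; split => // x [PQx [_ nPQx]].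
have f0 x : (0 <= (f x)%:E)%E by rewrite lee_fin sqdist3_ge0.
have mf : measurable_fun setT (fun x => (f x)%:E).
  by apply/measurable_EFinP; exact: meas_sqd (meas_s H0) (meas_s H1).
have hPQ x : \sum_(k : 'I_m * 'I_n) (wa k.1 * wb k.2) * ((u k.1, v k.2) == x)%:R =
    (\sum_i wa i * (u i == x.1)%:R) * (\sum_j wb j * (v j == x.2)%:R).
  move: x => [x1 x2] /=.
  rewrite big_distrlr /=.
  rewrite -(pair_bigA _ (fun i j => wa i * wb j * ((u i, v j) == (x1, x2))%:R)) /=.
  apply: eq_bigr => i _; apply: eq_bigr => j _.
  rewrite xpair_eqE natr_and; ring.
have hPQ1 x : PQ x -> \sum_(k : 'I_m * 'I_n) (wa k.1 * wb k.2) * ((u k.1, v k.2) == x)%:R = 1.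
  move=> [Px Qx]; rewrite hPQ (wt_id1 ha _ ((PE _).1 Px)) (wt_id1 hb _ ((QE _).1 Qx)).
  by rewrite mulr1.
have hPQ0 x : ~ PQ x -> \sum_(k : 'I_m * 'I_n) (wa k.1 * wb k.2) * ((u k.1, v k.2) == x)%:R = 0.
  move=> nPQ; rewrite hPQ.
  have [Px|nPx] := pselect (P x.1); last first.
    by rewrite (wt_id0 _ (fun h => nPx ((PE _).2 h))) mul0r.
  have [Qx|nQx] := pselect (Q x.2).
    by exfalso; apply: nPQ; split.
  by rewrite (wt_id0 _ (fun h => nQx ((QE _).2 h))) mulr0.
have c0 (k : 'I_m * 'I_n) : 0 <= wa k.1 * wb k.2 by apply: mulr_ge0.
have -> : (\int[gamma]_(x in @S2 R `*` @S2 R) (f x)%:E =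
    \int[gamma]_(x in PQ) (f x)%:E + \int[gamma]_(x in E) (f x)%:E)%E.
  rewrite -/D DU ge0_integral_setU //;
    try exact: measurable_funS mf;
    try (by move=> x _; exact: f0);
    by rewrite disj_set2E disj eqxx.
pose W i j := wa i * wb j.
have S2f : (\int[gamma]_(x in PQ) (f x)%:E =
    (\sum_i \sum_j (W i j * g0 i j + W i j * g1 i j -
        2 * (W i j * (Num.sqrt (g0 i j * g1 i j) * dot3 (u i) (v j)))))%:E)%E.
  rewrite (int_fin_pts gamma _ (fun k : 'I_m * 'I_n => (u k.1, v k.2))
    (fun k => wa k.1 * wb k.2) PQ (fun x => (f x)%:E) c0 hPQ1 hPQ0 f0 mf).
  rewrite (pair_bigA _ (fun i j => W i j * g0 i j + W i j * g1 i j -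
        2 * (W i j * (Num.sqrt (g0 i j * g1 i j) * dot3 (u i) (v j))))).
  rewrite -sumEFin; apply: eq_bigr => -[i j] _ /=.
  have Mfin := mu_pt_fin _ gamma (u i, v j).
  set M := fine (gamma [set (u i, v j)]).
  have M0 : 0 <= M by rewrite fine_ge0 // measure_ge0.
  have gM : gamma [set (u i, v j)] = M%:E.
    by rewrite fineK // ge0_fin_numE // measure_ge0.
  have e0 : g0 i j = fine (rho0 (u i, v j)) * M.
    have h := rho_pt H0 (u i, v j); rewrite g0E gM in h.
    by apply: EFin_inj; rewrite EFinM (fineK (rho_fin H0 _)).
  have e1 : g1 i j = fine (rho1 (u i, v j)) * M.
    have h := rho_pt H1 (u i, v j); rewrite g1E gM in h.
    by apply: EFin_inj; rewrite EFinM (fineK (rho_fin H1 _)).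
  rewrite gM -!EFinM; congr EFin.
  rewrite /f /= (sqdist3_pt M0 e0 e1 (g00 i j) (g10 i j) (hu i) (hv j)) /W.
  ring.
have SE : (\int[gamma]_(x in E) (f x)%:E = gamma0 E + gamma1 E)%E.
  have N0 : gamma0 (~` (P `*` [set: R3 R])) = 0%E.
    have -> : ~` (P `*` [set: R3 R]) = (~` P) `*` [set: R3 R].
      apply/seteqP; split; move=> [x y] /=.
        by move=> h; split => // Px; apply: h.
      by move=> [nPx _] [Px _].
    rewrite hg0; last exact: measurableC mP.
    apply: big1 => i _; rewrite diracE.
    have -> : (u i \in ~` P) = false.
      by apply/negbTE/negP => /set_mem /=; apply; apply/PE; exists i.
    by rewrite mulr0n mule0.
  have N1 : gamma1 (~` ([set: R3 R] `*` Q)) = 0%E.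
    have -> : ~` ([set: R3 R] `*` Q) = [set: R3 R] `*` (~` Q).
      apply/seteqP; split; move=> [x y] /=.
        by move=> h; split => // Qy; apply: h.
      by move=> [_ nQy] [_ Qy].
    rewrite hg1; last exact: measurableC mQ.
    apply: big1 => j _; rewrite diracE.
    have -> : (v j \in ~` Q) = false.
      by apply/negbTE/negP => /set_mem /=; apply; apply/QE; exists j.
    by rewrite mulr0n mule0.
  have mN0 : measurable (~` (P `*` [set: R3 R])).
    by apply: measurableC; apply: measurableX => //.
  have mN1 : measurable (~` ([set: R3 R] `*` Q)).
    by apply: measurableC; apply: measurableX => //.
  have ae0 := rho_0_ae H0 _ mN0 N0.
  have ae1 := rho_0_ae H1 _ mN1 N1.
  have p0 := rho_ge0_ae H0.
  have p1 := rho_ge0_ae H1.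
  have h0 : \forall x \ae gamma,
      ((~` (P `*` [set: R3 R])) x -> rho0 x = 0%E) /\ (0 <= rho0 x)%E.
    by apply: filterS2 ae0 p0 => x hA hB; split.
  have h1 : \forall x \ae gamma,
      ((~` ([set: R3 R] `*` Q)) x -> rho1 x = 0%E) /\ (0 <= rho1 x)%E.
    by apply: filterS2 ae1 p1 => x hA hB; split.
  have aeq : ae_eq gamma E (fun x => (f x)%:E) (rho0 \+ rho1)%E.
    apply: filterS2 h0 h1 => x [a0 b0] [a1 b1] [[Sx1 Sx2] nPQ].
    have e0 : rho0 x = (fine (rho0 x))%:E by rewrite fineK // rho_fin.
    have e1 : rho1 x = (fine (rho1 x))%:E by rewrite fineK // rho_fin.
    have r00 : 0 <= fine (rho0 x) by rewrite -lee_fin -e0.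
    have r10 : 0 <= fine (rho1 x) by rewrite -lee_fin -e1.
    rewrite /= [in RHS]e0 [in RHS]e1 -EFinD; congr EFin.
    rewrite /f (sqdist3E Sx1 Sx2) !sqr_sqrtr //.
    have [Px1|nPx1] := pselect (P x.1); last first.
      have -> : fine (rho0 x) = 0 by rewrite a0 // => -[].
      by rewrite sqrtr0; ring.
    have [Qx2|nQx2] := pselect (Q x.2).
      by exfalso; apply: nPQ; split.
    have -> : fine (rho1 x) = 0 by rewrite a1 // => -[].
    by rewrite sqrtr0; ring.
  rewrite (ae_eq_integral (rho0 \+ rho1)%E) //; last 2 first.
  - exact: measurable_funS measurableT (subsetT _) mf.
  - apply: emeasurable_funD.
    + exact: measurable_funS measurableT (subsetT _) (rho_meas H0).
    + exact: measurable_funS measurableT (subsetT _) (rho_meas H1).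
  rewrite integralD //.
  - by rewrite -!rho_int.
  - exact: integrableS measurableT mE (subsetT _) (rho_integrable H0).
  - exact: integrableS measurableT mE (subsetT _) (rho_integrable H1).
have G0 : ((\sum_i a i)%:E = (\sum_i \sum_j W i j * g0 i j)%:E + gamma0 E)%E.
  have T0 : gamma0 setT = (\sum_i a i)%:E.
    rewrite -setXTT hg0 // -sumEFin; apply: eq_bigr => i _.
    by rewrite diracT mule1.
  have TD : gamma0 setT = gamma0 D.
    rewrite -(setUCr D) measureU //; [|exact: measurableC mD|by rewrite setICr].
    by rewrite -[RHS]adde0; congr (_ + _)%E; exact: hg0S.
  have PQs : gamma0 PQ = (\sum_i \sum_j W i j * g0 i j)%:E.
    have := int_fin_pts gamma0 _ (fun k : 'I_m * 'I_n => (u k.1, v k.2))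
      (fun k => wa k.1 * wb k.2) PQ (cst 1%E) c0 hPQ1 hPQ0 (fun _ => lee01)
      (measurable_cst _).
    rewrite integral_cst // mul1e => ->.
    rewrite (pair_bigA _ (fun i j => W i j * g0 i j)) -sumEFin.
    apply: eq_bigr => -[i j] _ /=.
    by rewrite mul1e g0E -EFinM.
  by rewrite -T0 TD DU measureU //; congr (_ + _)%E; exact: PQs.
have G1 : ((\sum_j b j)%:E = (\sum_i \sum_j W i j * g1 i j)%:E + gamma1 E)%E.
  have T0 : gamma1 setT = (\sum_j b j)%:E.
    rewrite -setXTT hg1 // -sumEFin; apply: eq_bigr => j _.
    by rewrite diracT mule1.
  have TD : gamma1 setT = gamma1 D.
    rewrite -(setUCr D) measureU //; [|exact: measurableC mD|by rewrite setICr].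
    by rewrite -[RHS]adde0; congr (_ + _)%E; exact: hg1S.
  have PQs : gamma1 PQ = (\sum_i \sum_j W i j * g1 i j)%:E.
    have := int_fin_pts gamma1 _ (fun k : 'I_m * 'I_n => (u k.1, v k.2))
      (fun k => wa k.1 * wb k.2) PQ (cst 1%E) c0 hPQ1 hPQ0 (fun _ => lee01)
      (measurable_cst _).
    rewrite integral_cst // mul1e => ->.
    rewrite (pair_bigA _ (fun i j => W i j * g1 i j)) -sumEFin.
    apply: eq_bigr => -[i j] _ /=.
    by rewrite mul1e g1E -EFinM.
  by rewrite -T0 TD DU measureU //; congr (_ + _)%E; exact: PQs.
have MS : \sum_(i < m.+1) \sum_(j < n.+1)
    sqdist3 (Num.sqrt (A i j)) (ext_pts u i) (Num.sqrt (B i j)) (ext_pts v j) =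
    \sum_i a i + \sum_j b j -
    2 * \sum_i \sum_j (W i j * (Num.sqrt (g0 i j * g1 i j) * dot3 (u i) (v j))).
  transitivity (\sum_(i < m.+1) \sum_(j < n.+1) (A i j + B i j -
      2 * (Num.sqrt (A i j * B i j) * dot3 (ext_pts u i) (ext_pts v j)))).
    apply: eq_bigr => i _; apply: eq_bigr => j _.
    rewrite (sqdist3_mx (Age0 i j) (Bge0 i j) (ext_S2 i hu) (ext_S2 j hv)).
    by rewrite mulrA.
  rewrite sum2_lin.
  have SA : \sum_(i < m.+1) \sum_(j < n.+1) A i j = \sum_i a i.
    rewrite big_ord_recl big1 ?add0r; last by move=> j _; exact: A0j.
    by apply: eq_bigr => i _; exact: rowA.
  have SB : \sum_(i < m.+1) \sum_(j < n.+1) B i j = \sum_j b j.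
    transitivity (\sum_(j < n.+1) \sum_(i < m.+1) B i j); first exact: exchange_big.
    rewrite big_ord_recl big1 ?add0r; last by move=> i _; exact: Bi0.
    by apply: eq_bigr => j _; exact: colB.
  have SC : \sum_(i < m.+1) \sum_(j < n.+1)
      (Num.sqrt (A i j * B i j) * dot3 (ext_pts u i) (ext_pts v j)) =
      \sum_i \sum_j (W i j * (Num.sqrt (g0 i j * g1 i j) * dot3 (u i) (v j))).
    rewrite big_ord_recl big1 ?add0r; last first.
      by move=> j _; rewrite A0j mul0r sqrtr0 mul0r.
    apply: eq_bigr => i _.
    rewrite big_ord_recl Bi0 mulr0 sqrtr0 mul0r add0r.
    apply: eq_bigr => j _.
    rewrite Aij Bij /ext_pts !liftK /Ap /Bp /W.
    have -> : wa i * wb j * g0 i j * (wa i * wb j * g1 i j) =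
              (wa i * wb j) ^+ 2 * (g0 i j * g1 i j) by ring.
    rewrite sqrtrM ?sqr_ge0 // sqrtr_sqr (ger0_norm (mulr_ge0 (wa0 i) (wb0 j))).
    ring.
  by rewrite SA SB SC.
rewrite S2f SE MS sum2_lin.
have fE0 : gamma0 E = (fine (gamma0 E))%:E.
  by rewrite fineK // fin_num_measure.
have fE1 : gamma1 E = (fine (gamma1 E))%:E.
  by rewrite fineK // fin_num_measure.
rewrite fE0 in G0; rewrite fE1 in G1.
rewrite fE0 fE1 -!EFinD; congr EFin.
move: G0 G1; rewrite -!EFinD => -[->] -[->].
lra.
Qed.
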